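(* Let $k$ be a field and $A_k$ a $k$-algebra with a $k$-linear involution $a\mapsto a^*$. Let $E$ be a finite-dimensional $A_k$-module with a nondegenerate $k$-bilinear form $b$ satisfying $b(ax,y)=b(x,a^*y)$ for all $a\in A_k$, $x,y\in E$, where either $b$ is alternating, or $b$ is symmetric and $\mathrm{char}(k)\neq2$. Let $E^{\mathrm{ss}}$ be the semisimplification of the $A_k$-module $E$. Then there exists a bilinear form $b'$ on $E^{\mathrm{ss}}$, symmetric if $b$ is symmetric and alternating if $b$ is alternating, such that $b'(ax,y)=b'(x,a^*y)$ for all $a\in A_k$, $x,y\in E^{\mathrm{ss}}$, and such that $b'$ is isomorphic to $b$ as a $k$-bilinear form.
   Context: The semisimplification of a finite-length module is the direct sum of the successive quotients of a Jordan–Hölder filtration; it is well-defined up to isomorphism. *)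

(* Defs.v *)
From HB Require Import structures.
From mathcomp Require Import all_boot all_order all_algebra.
Set Implicit Arguments. Unset Strict Implicit. Unset Printing Implicit Defensive.
Import GRing.Theory.
Local Open Scope ring_scope.

Section Defs.
Variables (k : fieldType) (A : algType k).

Definition involution (star : A -> A) : Prop :=
  [/\ forall (c : k) (a b : A), star (c *: a + b) = c *: star a + star b,
      forall a : A, star (star a) = a &
      forall a b : A, star (a * b) = star b * star a].

Definition module_action (E : vectType k) (act : A -> 'End(E)) : Prop :=
  [/\ forall (c : k) (a b : A), act (c *: a + b) = c *: act a + act b,
      act 1 = \1%VF &
      forall a b : A, act (a * b) = (act a \o act b)%VF].

Definition submodule (E : vectType k) (act : A -> 'End(E)) (U : {vspace E}) : Prop :=
  forall (a : A) (x : E), x \in U -> act a x \in U.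

Definition simple_factor (E : vectType k) (act : A -> 'End(E)) (U V : {vspace E}) : Prop :=
  [/\ (U <= V)%VS, U != V &
      forall M : {vspace E}, submodule act M -> (U <= M)%VS -> (M <= V)%VS ->
        M = U \/ M = V].

(* (F, actF) is (isomorphic to) the semisimplification of (E, actE):
   there is a Jordan–Hölder filtration 0 = E_0 ⊊ E_1 ⊊ ... ⊊ E_r = E of E,
   and F is the internal direct sum of submodules F_0, ..., F_{r-1} with
   A-module isomorphisms E_{i+1}/E_i ≅ F_i, induced by linear maps
   phi_i : E_{i+1} -> F_i that are A-linear, onto, with kernel E_i. *)
Definition is_semisimplification (E F : vectType k)
    (actE : A -> 'End(E)) (actF : A -> 'End(F)) : Prop :=
  exists (r : nat) (Es : nat -> {vspace E}) (Fs : nat -> {vspace F})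
         (phi : nat -> 'Hom(E, F)),
  [/\ [/\ Es 0%N = 0%VS, Es r = fullv &
          forall i, (i <= r)%N -> submodule actE (Es i)],
      forall i, (i < r)%N -> simple_factor actE (Es i) (Es i.+1),
      forall i, (i < r)%N ->
        [/\ submodule actF (Fs i),
            (phi i @: Es i.+1)%VS = Fs i,
            (forall x, x \in Es i.+1 -> (phi i x = 0 <-> x \in Es i)) &
            (forall (a : A) x, x \in Es i.+1 -> phi i (actE a x) = actF a (phi i x))],
      (\sum_(i < r) Fs i)%VS = fullv &
      directv (\sum_(i < r) Fs i)].

Definition bilinear_form (E : vectType k) (b : E -> E -> k) : Prop :=
  (forall (c : k) x1 x2 y, b (c *: x1 + x2) y = c * b x1 y + b x2 y) /\
  (forall (c : k) x y1 y2, b x (c *: y1 + y2) = c * b x y1 + b x y2).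

Definition nondegenerate_bform (E : vectType k) (b : E -> E -> k) : Prop :=
  (forall x, (forall y, b x y = 0) -> x = 0) /\
  (forall y, (forall x, b x y = 0) -> y = 0).

Definition symmetric_bform (E : vectType k) (b : E -> E -> k) : Prop :=
  forall x y, b x y = b y x.

Definition alternating_bform (E : vectType k) (b : E -> E -> k) : Prop :=
  forall x, b x x = 0.

Definition compatible_form (E : vectType k) (act : A -> 'End(E)) (star : A -> A)
    (b : E -> E -> k) : Prop :=
  forall (a : A) x y, b (act a x) y = b x (act (star a) y).

Definition forms_isomorphic (E F : vectType k) (b : E -> E -> k) (b' : F -> F -> k) : Prop :=
  exists f : 'Hom(E, F), bijective (fun_of_lfun f) /\ forall x y, b' (f x) (f y) = b x y.

End Defs.

(* Main.v *)
Require Import Defs.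
From HB Require Import structures.
From mathcomp Require Import all_boot all_order all_algebra.
From mathcomp Require Import ring.
Set Implicit Arguments. Unset Strict Implicit. Unset Printing Implicit Defensive.
Import GRing.Theory.
Local Open Scope ring_scope.
Section Forms.
Variables (k : fieldType) (E : vectType k) (b : E -> E -> k).
Hypothesis Hb1 : forall (c : k) x1 x2 y, b (c *: x1 + x2) y = c * b x1 y + b x2 y.
Hypothesis Hb2 : forall (c : k) x y1 y2, b x (c *: y1 + y2) = c * b x y1 + b x y2.

Lemma b0l y : b 0 y = 0.
Proof. have := Hb1 1 0 0 y; rewrite scale1r addr0 mul1r => H.
by apply: (addrI (b 0 y)); rewrite addr0 -H. Qed.
Lemma b0r x : b x 0 = 0.
Proof. have := Hb2 1 x 0 0; rewrite scale1r addr0 mul1r => H.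
by apply: (addrI (b x 0)); rewrite addr0 -H. Qed.
Lemma bDl x1 x2 y : b (x1 + x2) y = b x1 y + b x2 y.
Proof. by rewrite -[x1]scale1r Hb1 mul1r scale1r. Qed.
Lemma bDr x y1 y2 : b x (y1 + y2) = b x y1 + b x y2.
Proof. by rewrite -[y1]scale1r Hb2 mul1r scale1r. Qed.
Lemma bZl c x y : b (c *: x) y = c * b x y.
Proof. by rewrite -[c *: x]addr0 Hb1 b0l addr0. Qed.
Lemma bZr c x y : b x (c *: y) = c * b x y.
Proof. by rewrite -[c *: y]addr0 Hb2 b0r addr0. Qed.
Lemma bNl x y : b (- x) y = - b x y.
Proof. by rewrite -scaleN1r bZl mulN1r. Qed.
Lemma bNr x y : b x (- y) = - b x y.
Proof. by rewrite -scaleN1r bZr mulN1r. Qed.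
Lemma bBl x1 x2 y : b (x1 - x2) y = b x1 y - b x2 y.
Proof. by rewrite bDl bNl. Qed.
Lemma bBr x y1 y2 : b x (y1 - y2) = b x y1 - b x y2.
Proof. by rewrite bDr bNr. Qed.
Lemma bsuml (I : Type) (s : seq I) (P : pred I) (F : I -> E) y :
  b (\sum_(i <- s | P i) F i) y = \sum_(i <- s | P i) b (F i) y.
Proof. exact: (big_morph (fun x => b x y) (fun x1 x2 => bDl x1 x2 y) (b0l y)). Qed.
Lemma bsumr (I : Type) (s : seq I) (P : pred I) (F : I -> E) x :
  b x (\sum_(i <- s | P i) F i) = \sum_(i <- s | P i) b x (F i).
Proof. exact: (big_morph (fun y => b x y) (fun y1 y2 => bDr x y1 y2) (b0r x)). Qed.

Lemma lfun_of (U V : vectType k) (f : U -> V) :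
  (forall (c : k) x y, f (c *: x + y) = c *: f x + f y) ->
  exists h : 'Hom(U, V), forall x, h x = f x.
Proof.
move=> Hf.
have lf : linear f by move=> c x y; exact: Hf.
pose fL : {linear U -> V} := HB.pack f (GRing.isLinear.Build _ _ _ _ f lf).
exists (linfun fL) => x; by rewrite lfunE.
Qed.

Definition theta (U : {vspace E}) (x : E) : 'rV[k]_(\dim U) :=
  \row_(i < \dim U) b (vbasis U)`_i x.

Lemma theta_lin U : exists h : 'Hom(E, 'rV[k]_(\dim U)), forall x, h x = theta U x.
Proof.
apply: lfun_of => c x y; apply/rowP => i; by rewrite !mxE Hb2.
Qed.

Lemma bexp (U : {vspace E}) u x : u \in U ->
  b u x = \sum_(i < \dim U) coord (vbasis U) i u * b (vbasis U)`_i x.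
Proof.
move=> Uu; rewrite {1}(coord_vbasis Uu) bsuml; apply: eq_bigr => i _.
by rewrite bZl.
Qed.

Lemma theta0P (U : {vspace E}) x : theta U x = 0 <-> (forall u, u \in U -> b u x = 0).
Proof.
split=> [H u Uu | H].
  rewrite (bexp x Uu) big1 // => i _.
  by have /rowP/(_ i) := H; rewrite !mxE => ->; rewrite mulr0.
apply/rowP => i; rewrite !mxE; apply: H; apply: vbasis_mem; by rewrite mem_nth // size_tuple.
Qed.


Lemma linfunP (U V : vectType k) (f : U -> V) :
  (forall (c : k) x y, f (c *: x + y) = c *: f x + f y) ->
  forall x, linfun f x = f x.
Proof.
move=> Hf.
have lf : linear f by move=> c x y; exact: Hf.
pose fL : {linear U -> V} := HB.pack f (GRing.isLinear.Build _ _ _ _ f lf).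
move=> x; exact: (lfunE fL x).
Qed.

Lemma thetaE (U : {vspace E}) x : linfun (theta U) x = theta U x.
Proof. by apply: linfunP => c y z; apply/rowP => i; rewrite !mxE Hb2. Qed.

Definition perpv (U : {vspace E}) := lker (linfun (theta U)).

Lemma perpvP (U : {vspace E}) x :
  x \in perpv U <-> (forall u, u \in U -> b u x = 0).
Proof. rewrite memv_ker thetaE; split => [/eqP/theta0P // | /theta0P -> //]. Qed.

Lemma pair_dim (P Q : {vspace E}) :
  (forall y, y \in Q -> (forall x, x \in P -> b x y = 0) -> y = 0) ->
  (\dim Q <= \dim P)%N.
Proof.
move=> H.
have -> : \dim Q = \dim (linfun (theta P) @: Q).
  rewrite limg_dim_eq //; apply/eqP; rewrite -subv0; apply/subvP => y.
  rewrite memv_cap memv0 => /andP[Qy Ky]; apply/eqP; apply: H => //.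
  by apply/perpvP.
apply: leq_trans (dimvS (subvf _)) _.
by rewrite dimvf (dim_matrix k 1 (\dim P)) mul1r.
Qed.

Lemma pair_solve (P Q : {vspace E}) :
  (forall y, y \in Q -> (forall x, x \in P -> b x y = 0) -> y = 0) ->
  (\dim P <= \dim Q)%N ->
  forall w : 'I_(\dim P) -> k,
  exists2 y, y \in Q & forall i : 'I_(\dim P), b (vbasis P)`_i y = w i.
Proof.
move=> H le_PQ w.
have dimQ : \dim (linfun (theta P) @: Q) = \dim Q.
  rewrite limg_dim_eq //; apply/eqP; rewrite -subv0; apply/subvP => y.
  rewrite memv_cap memv0 => /andP[Qy Ky]; apply/eqP; apply: H => //.
  by apply/perpvP.
have full : (linfun (theta P) @: Q)%VS = fullv.
  apply/eqP; by rewrite eqEdim subvf /= dimQ dimvf (dim_matrix k 1 (\dim P)) mul1r.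
have : (\row_i w i) \in (linfun (theta P) @: Q)%VS by rewrite full memvf.
case/memv_imgP => y Qy; rewrite thetaE => /rowP Hy.
exists y => // i; have := Hy i; rewrite !mxE => ->; done.
Qed.

Lemma bext (P : {vspace E}) y z :
  (forall i : 'I_(\dim P), b (vbasis P)`_i y = b (vbasis P)`_i z) ->
  forall x, x \in P -> b x y = b x z.
Proof.
move=> H x Px; rewrite (bexp y Px) (bexp z Px); apply: eq_bigr => i _.
by rewrite H.
Qed.

Lemma inv_on (F : vectType k) (f : 'Hom(E, F)) (U : {vspace E}) :
  (forall x, x \in U -> f x = 0 -> x = 0) ->
  exists h : 'Hom(F, E), forall x, x \in U -> h (f x) = x.
Proof.
move=> H; pose g := (f \o projv U)%VF.
exists (projv U \o g^-1)%VF => x Ux.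
have gx : g x = f x by rewrite lfunE /= projv_id.
have : f x \in limg g by rewrite -gx memv_img ?memvf.
move/limg_lfunVK; rewrite lfunE /= => e.
apply/eqP; rewrite -subr_eq0; apply/eqP; apply: H.
  by rewrite memvB // lfunE /= memv_proj.
by rewrite linearB /= lfunE /= e subrr.
Qed.


Lemma bexpr (U : {vspace E}) u x : u \in U ->
  b x u = \sum_(i < \dim U) coord (vbasis U) i u * b x (vbasis U)`_i.
Proof.
move=> Uu; rewrite {1}(coord_vbasis Uu) bsumr; apply: eq_bigr => i _.
by rewrite bZr.
Qed.

Variable eps : k.
Hypothesis Heps : forall x y, b y x = eps * b x y.
Hypothesis Heps2 : eps * eps = 1.
Hypothesis Hdiag : forall x, b x x / 2 + eps * (b x x / 2) = b x x.

Lemma brefl x y : b x y = 0 -> b y x = 0.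
Proof. by move=> H; rewrite Heps H mulr0. Qed.

Lemma iso_compl (L C : {vspace E}) :
  (forall x y, x \in L -> y \in L -> b x y = 0) ->
  (forall l, l \in L -> (forall x, x \in C -> b x l = 0) -> l = 0) ->
  (\dim C <= \dim L)%N ->
  exists tau : 'End(E), (forall x, tau x \in L) /\
    (forall x y, x \in C -> y \in C -> b (x + tau x) (y + tau y) = 0).
Proof.
move=> isoL HR dimCL.
set m := \dim C; set e := vbasis C.
pose cc (i j : 'I_m) := if (i < j)%N then b e`_i e`_j
   else if i == j then b e`_i e`_i / 2 else 0.
have : forall j : 'I_m, exists l, l \in L /\ forall i : 'I_m, b e`_i l = cc i j.
  move=> j; have [l Ll Hl] := pair_solve HR dimCL (fun i => cc i j).
  by exists l.
case/fin_all_exists => l Hl.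
have [tau tauE] : exists tau : 'End(E), forall x,
    tau x = - \sum_(j < m) coord e j x *: l j.
  apply: lfun_of => c x y.
  rewrite scalerN -opprD; congr (- _).
  rewrite scaler_sumr -big_split /=; apply: eq_bigr => j _.
  by rewrite linearP scalerDl scalerA.
have tauL x : tau x \in L.
  rewrite tauE memvN; apply: memv_suml => j _; apply: memvZ.
  by case: (Hl j).
exists tau; split => // x y Cx Cy.
have t0 (i j : 'I_m) : b e`_i e`_j - cc i j - eps * cc j i = 0.
  rewrite /cc; case: (ltngtP i j) => [lt_ij | lt_ji | eq_ij].
  - have -> : (j == i) = false.
      by apply/eqP => eji; move: lt_ij; rewrite eji ltnn.
    by rewrite mulr0 subr0 subrr.
  - have -> : (i == j) = false.
      by apply/eqP => eji; move: lt_ji; rewrite eji ltnn.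
    by rewrite Heps subr0 subrr.
  - have eij : i = j by apply: val_inj.
    rewrite -eij eqxx -{1}Hdiag; ring.
set al := fun i => coord e i x; set be := fun j => coord e j y.
have E1 : b x y = \sum_(i < m) \sum_(j < m) al i * be j * b e`_i e`_j.
  rewrite (bexp y Cx); apply: eq_bigr => i _.
  rewrite (bexpr _ Cy) mulr_sumr; apply: eq_bigr => j _; rewrite /al /be; ring.
have E2 : b x (tau y) = - \sum_(i < m) \sum_(j < m) al i * be j * cc i j.
  rewrite tauE bNr bsumr exchange_big /=; congr (- _); apply: eq_bigr => j _.
  rewrite bZr (bexp _ Cx) mulr_sumr; apply: eq_bigr => i _.
  case: (Hl j) => _ ->; rewrite /al /be; ring.
have E3 : b (tau x) y = - \sum_(i < m) \sum_(j < m) al i * be j * (eps * cc j i).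
  rewrite tauE bNl bsuml; congr (- _); apply: eq_bigr => i _.
  rewrite bZl Heps (bexp _ Cy) !mulr_sumr; apply: eq_bigr => j _.
  case: (Hl i) => _ ->; rewrite /al /be; ring.
have E4 : b (tau x) (tau y) = 0 by apply: isoL.
rewrite bDl !bDr E1 E2 E3 E4 addr0.
rewrite -!sumrN -!big_split /= big1 // => i _.
rewrite -!sumrN -!big_split /= big1 // => j _.
transitivity (al i * be j * (b e`_i e`_j - cc i j - eps * cc j i)); first by ring.
by rewrite t0 mulr0.
Qed.


Variables (A : algType k) (star : A -> A).
Hypothesis Hstar2 : forall a, star (star a) = a.
Variables (F : vectType k) (actF : A -> 'End(F)) (Fs : nat -> {vspace F})
  (phi : nat -> 'Hom(E, F)) (r : nat).

Definition good (V : {vspace E}) (act : A -> 'End(E)) (Es : nat -> {vspace E})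
   (T : nat -> bool) : Prop :=
 [/\ (forall x, x \in V -> (forall y, y \in V -> b x y = 0) -> x = 0),
     (forall a x y, x \in V -> y \in V -> b (act a x) y = b x (act (star a) y)),
     [/\ Es 0%N = 0%VS, Es r = V & forall i, (i <= r)%N -> submodule act (Es i)],
     (forall i, (i < r)%N -> ~~ T i -> Es i = Es i.+1) &
     (forall i, (i < r)%N -> T i ->
        [/\ simple_factor act (Es i) (Es i.+1), (phi i @: Es i.+1)%VS = Fs i,
            (forall x, x \in Es i.+1 -> (phi i x = 0 <-> x \in Es i)) &
            (forall a x, x \in Es i.+1 -> phi i (act a x) = actF a (phi i x))])].

Definition concl (V : {vspace E}) (T : nat -> bool) : Prop :=
  exists g : nat -> 'Hom(F, E),
  [/\ forall i, (i < r)%N -> T i -> (g i @: Fs i <= V)%VS,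
      (V <= \sum_(i < r | T i) (g i @: Fs i))%VS &
      forall i j a u v, (i < r)%N -> (j < r)%N -> T i -> T j ->
        u \in Fs i -> v \in Fs j ->
        b (g i (actF a u)) (g j v) = b (g i u) (g j (actF (star a) v))].

Section Good.
Variables (V : {vspace E}) (act : A -> 'End(E)) (Es : nat -> {vspace E}) (T : nat -> bool).
Hypothesis HG : good V act Es T.

Lemma good_mono i : (i < r)%N -> (Es i <= Es i.+1)%VS.
Proof.
case: HG => _ _ _ Hin Hact Hi.
case Ti: (T i); first by case: (Hact i Hi Ti) => [[]].
by rewrite (Hin i Hi) ?Ti.
Qed.

Lemma good_monoS i j : (i <= j)%N -> (j <= r)%N -> (Es i <= Es j)%VS.
Proof.
move=> le_ij; elim: j le_ij => [|j IH]; first by rewrite leqn0 => /eqP ->.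
rewrite leq_eqVlt => /orP[/eqP <- // | lt_ij] ltjr.
apply: subv_trans (IH lt_ij (ltnW ltjr)) (good_mono ltjr).
Qed.

Lemma good_sub i : (i <= r)%N -> (Es i <= V)%VS.
Proof. by move=> ler; case: HG => _ _ [_ <- _] _ _; apply: good_monoS. Qed.

Lemma good_sm i a x : (i <= r)%N -> x \in Es i -> act a x \in Es i.
Proof. by move=> ler Ex; case: HG => _ _ [_ _ Hs] _ _; apply: Hs. Qed.

Lemma good_V a x : x \in V -> act a x \in V.
Proof. by case: HG => _ _ [_ <- _] _ _ => Vx; apply: good_sm. Qed.

Lemma good_compat' a x y : x \in V -> y \in V -> b x (act a y) = b (act (star a) x) y.
Proof. by case: HG => _ Hc _ _ _ Vx Vy; rewrite Hc // Hstar2. Qed.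


Lemma FsA i a u : (i < r)%N -> T i -> u \in Fs i -> actF a u \in Fs i.
Proof.
move=> ir Ti; case: HG => _ _ _ _ Hact; have [_ Himg _ Hlin] := Hact i ir Ti.
rewrite -Himg => /memv_imgP[x Ex ->]; rewrite -Hlin //.
by apply: memv_img; apply: good_sm.
Qed.

Lemma phi_inv i (U : {vspace E}) : (i < r)%N -> T i -> (U <= Es i.+1)%VS ->
  (forall x, x \in U -> x \in Es i -> x = 0) -> (Es i.+1 <= Es i + U)%VS ->
  exists h : 'Hom(F, E), [/\ forall u, u \in Fs i -> h u \in U,
     forall u, u \in Fs i -> phi i (h u) = u,
     forall x, x \in U -> h (phi i x) = x &
     forall a u, u \in Fs i -> h (actF a u) - act a (h u) \in Es i].
Proof.
move=> ir Ti sU HU spl.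
case: HG => _ _ _ _ Hact; have [[sEE _ _] Himg Hker Hlin] := Hact i ir Ti.
have [h hK] : exists h : 'Hom(F, E), forall x, x \in U -> h (phi i x) = x.
  apply: inv_on => x Ux phx; apply: HU => //.
  by apply/(Hker x) => //; apply: subvP sU _ Ux.
have Hu u : u \in Fs i -> exists2 y, y \in U & u = phi i y.
  rewrite -Himg => /memv_imgP[x Ex ->].
  have /memv_addP[e Ee [y Uy ->]] := subvP spl _ Ex.
  exists y => //; rewrite linearD /= (proj2 (Hker e (subvP sEE _ Ee)) Ee) add0r //.
have hU u : u \in Fs i -> h u \in U by case/Hu => y Uy ->; rewrite hK.
have phK u : u \in Fs i -> phi i (h u) = u by case/Hu => y Uy ->; rewrite hK.
exists h; split => // a u Fu.
have Fau := FsA a ir Ti Fu.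
have hUE v : v \in Fs i -> h v \in Es i.+1 by move=> Fv; apply: subvP sU _ (hU v Fv).
apply/(Hker _ _).1.
  by apply: memvB; [exact: hUE | apply: good_sm => //; exact: hUE].
by rewrite linearB /= phK // Hlin ?hUE // phK // subrr.
Qed.

Variables (i0 : nat) (W : {vspace E}) (D : nat -> bool).
Hypotheses (Hi0r : (i0 < r)%N) (HTi0 : T i0) (HEi0 : Es i0 = 0%VS)
  (Hmin : forall i, (i < r)%N -> T i -> (i0 <= i)%N).
Let L := Es i0.+1.
Hypotheses (HWV : (W <= V)%VS) (HWp : (W <= perpv L)%VS)
  (HLW : forall x, x \in L -> x \in W -> x = 0)
  (Hdec : forall x, x \in V -> x \in perpv L -> x \in (L + W)%VS)
  (Hnd : forall x, x \in W -> (forall y, y \in W -> b x y = 0) -> x = 0)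
  (HD0 : D i0)
  (HDtriv : forall i, (i < r)%N -> T i -> D i -> (Es i.+1 :&: W <= Es i)%VS)
  (Hsplit : forall i, (i < r)%N -> T i -> ~~ D i ->
     (Es i.+1 <= Es i + (Es i.+1 :&: W))%VS).

Let pi := daddv_pi W L.
Definition ract (a : A) : 'End(E) := (pi \o act a)%VF.

Lemma WL0 : (W :&: L = 0)%VS.
Proof.
apply/eqP; rewrite -subv0; apply/subvP => x; rewrite memv_cap memv0.
by case/andP => Wx Lx; apply/eqP; apply: HLW.
Qed.

Lemma LV : (L <= V)%VS. Proof. exact: good_sub. Qed.

Lemma pi_diff x : x \in (L + W)%VS -> x - pi x \in L.
Proof.
move=> Hx; have := @daddv_pi_add _ _ W L x WL0.
rewrite addvC => /(_ Hx) e.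
by rewrite -{1}e addrC addKr memv_pi.
Qed.

Lemma act_perp a x : x \in W -> act a x \in (L + W)%VS.
Proof.
move=> Wx; have Vx := subvP HWV _ Wx; apply: Hdec; first exact: good_V.
apply/perpvP => u Lu.
rewrite good_compat' //; last exact: subvP LV _ Lu.
have /perpvP := subvP HWp _ Wx; apply.
by apply: good_sm => //.
Qed.

Lemma ractE a x : ract a x = pi (act a x).
Proof. by rewrite lfunE. Qed.

Lemma ract_delta a x : x \in W -> act a x - ract a x \in L.
Proof. by move=> Wx; rewrite ractE; apply: pi_diff; apply: act_perp. Qed.

Lemma ractW a x : ract a x \in W.
Proof. by rewrite ractE memv_pi. Qed.

Lemma LEs i : (i < r)%N -> T i -> ~~ D i -> (L <= Es i)%VS.
Proof.
move=> Hi Ti nDi; apply: good_monoS => //; last exact: ltnW.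
rewrite ltn_neqAle Hmin // andbT; apply/eqP => e; move: nDi; by rewrite -e HD0.
Qed.

Lemma restrict_good :
  good W ract (fun i => Es i :&: W)%VS (fun i => T i && ~~ D i).
Proof.
case: (HG) => HndV Hc [HE0 HEr HEs] Hin Hact.
split => //.
- move=> a x y Wx Wy.
  have Vx := subvP HWV _ Wx; have Vy := subvP HWV _ Wy.
  have d1 := ract_delta a Wx; have d2 := ract_delta (star a) Wy.
  have -> : ract a x = act a x - (act a x - ract a x) by rewrite opprB addrC subrK.
  have -> : ract (star a) y = act (star a) y - (act (star a) y - ract (star a) y).
    by rewrite opprB addrC subrK.
  rewrite bBl bBr Hc //.
  have e1 : b (act a x - ract a x) y = 0.
    by have /perpvP := subvP HWp _ Wy; apply.
  have e2 : b x (act (star a) y - ract (star a) y) = 0.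
    by apply: brefl; have /perpvP := subvP HWp _ Wx; apply.
  by rewrite e1 e2.
- split; first by rewrite HE0 cap0v.
    by rewrite HEr; apply/capv_idPr.
  move=> i ler a x; rewrite memv_cap => /andP[Ex Wx].
  rewrite memv_cap ractW andbT.
  case: (leqP i i0) => [lei | lti].
    have : x \in 0%VS by rewrite -HEi0; apply: subvP (good_monoS lei (ltnW Hi0r)) _ Ex.
    by rewrite memv0 => /eqP ->; rewrite linear0 mem0v.
  have LEi : (L <= Es i)%VS by apply: good_monoS.
  have -> : ract a x = act a x - (act a x - ract a x) by rewrite opprB addrC subrK.
  apply: memvB; first exact: good_sm.
  exact: subvP LEi _ (ract_delta a Wx).
- move=> i ir; rewrite negb_and negbK => /orP[nTi | Di].
    by rewrite (Hin i ir nTi).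
  case Ti: (T i); last by rewrite (Hin i ir) ?Ti.
  apply/eqP; rewrite eqEsubv; apply/andP; split.
    by apply: capvS => //; apply: good_mono.
  by rewrite subv_cap capvSr HDtriv.
- move=> i ir /andP[Ti nDi].
  have LEi := LEs ir Ti nDi.
  have [[sEE nEE Hmn] Himg Hker Hlin] := Hact i ir Ti.
  have spl := Hsplit ir Ti nDi.
  have phiL x : x \in L -> phi i x = 0.
    by move=> Lx; apply/(Hker x); [apply: subvP sEE _ (subvP LEi _ Lx) | apply: subvP LEi _ Lx].
  split.
  + split.
    * by apply: capvS.
    * apply/negP => /eqP e; move/negP: nEE; apply; rewrite eqEsubv sEE /=.
      by apply: subv_trans spl _; rewrite -e subv_add subvv capvSl.
    * move=> M HM H1 H2.
      have HM' : submodule act (M + Es i)%VS.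
        move=> a x /memv_addP[m Mm [e Ee ->]]; rewrite linearD /=.
        have Wm : m \in W by apply: subvP (subv_trans H2 (capvSr _ _)) _ Mm.
        have -> : act a m + act a e = ract a m + ((act a m - ract a m) + act a e).
          by rewrite addrA [ract a m + _]addrC subrK.
        apply: memv_add; first exact: HM.
        apply: memvD; last by apply: good_sm => //; apply: ltnW.
        exact: subvP LEi _ (ract_delta a Wm).
      have S1 : (Es i <= M + Es i)%VS by apply: addvSr.
      have S2 : (M + Es i <= Es i.+1)%VS.
        by rewrite subv_add sEE andbT; apply: subv_trans H2 (capvSl _ _).
      case: (Hmn _ HM' S1 S2) => e; [left | right];
        apply/eqP; rewrite eqEsubv.
        by rewrite H1 andbT subv_cap -{1}e addvSl (subv_trans H2 (capvSr _ _)).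
      rewrite H2 /=.
      apply/subvP => x; rewrite memv_cap -e => /andP[/memv_addP[m Mm [z Ez ->]] Wx].
      have Wm : m \in W by apply: subvP (subv_trans H2 (capvSr _ _)) _ Mm.
      have Wz : z \in W by rewrite -(addKr m z); apply: memvD => //; rewrite memvN.
      apply: memvD => //; apply: (subvP H1); by rewrite memv_cap Ez.
  + apply/eqP; rewrite eqEsubv; apply/andP; split.
      by rewrite -Himg limgS // capvSl.
    rewrite -Himg; apply/subvP => y /memv_imgP[x Ex ->].
    have /memv_addP[e Ee [w Ww ->]] := subvP spl _ Ex.
    rewrite linearD /= (proj2 (Hker e (subvP sEE _ Ee)) Ee) add0r.
    exact: memv_img.
  + move=> x; rewrite memv_cap => /andP[Ex Wx]; rewrite memv_cap Wx andbT.
    exact: Hker.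
  + move=> a x; rewrite memv_cap => /andP[Ex Wx].
    by rewrite -(Hlin a x Ex) -[act a x](subrK (ract a x)) linearD /= (phiL _ (ract_delta a Wx)) add0r.
Qed.

End Good.


Lemma dim_lt (V W L : {vspace E}) : (W <= V)%VS -> (L <= V)%VS ->
  (forall x, x \in L -> x \in W -> x = 0) -> L != 0%VS -> (\dim W < \dim V)%N.
Proof.
move=> WV LV HLW L0.
have WL : (W :&: L = 0)%VS.
  apply/eqP; rewrite -subv0; apply/subvP => x; rewrite memv_cap memv0.
  by case/andP => Wx Lx; apply/eqP; apply: HLW.
have : (W + L <= V)%VS by rewrite subv_add WV LV.
move/dimvS; rewrite dimv_disjoint_sum //; apply: leq_trans; rewrite -addn1 leq_add2l.
by rewrite lt0n dimv_eq0.
Qed.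

Lemma step V act Es T : good V act Es T ->
  (forall V' act' Es' T', (\dim V' < \dim V)%N -> good V' act' Es' T' -> concl V' T') ->
  concl V T.
Proof.
move=> HG IH; case: (HG) => HndV Hc [HE0 HEr HEs] Hin Hact.
case: (boolP [exists i : 'I_r, T i]) => [/existsP[i1 Ti1] | /existsPn none]; last first.
  have E0 i : (i <= r)%N -> Es i = 0%VS.
    elim: i => // i IHi ir; rewrite -(Hin i ir) ?IHi ?(ltnW ir) //.
    exact: (none (Ordinal ir)).
  exists (fun _ => 0%VF); split.
  - by move=> i ir Ti; move: (none (Ordinal ir)); rewrite /= Ti.
  - by rewrite -HEr E0 // sub0v.
  - by move=> i j a u v ir; move: (none (Ordinal ir)) => /= /negPf ->.
have ex : exists i, ((i < r)%N && T i) by exists i1; rewrite ltn_ord Ti1.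
case: (ex_minnP ex) => i0 /andP[Hi0r HTi0] Hmin'.
have Hmin i : (i < r)%N -> T i -> (i0 <= i)%N by move=> ir Ti; apply: Hmin'; rewrite ir Ti.
have HEi0 : Es i0 = 0%VS.
  have : forall i, (i <= i0)%N -> Es i = 0%VS.
    elim=> // i IHi ii0; have ir : (i < r)%N by apply: leq_trans ii0 (ltnW Hi0r).
    rewrite -Hin ?IHi ?(ltnW ii0) //; apply/negP => Ti.
    by have := Hmin i ir Ti; rewrite leqNgt ii0.
  by apply.
set L := Es i0.+1.
have [[sEL nEL HmL] HimgL HkerL HlinL] := Hact i0 Hi0r HTi0.
have LV : (L <= V)%VS by exact: (good_sub HG).
have L0 : L != 0%VS by rewrite eq_sym -HEi0.
have LEs i : (i < r)%N -> T i -> i != i0 -> (L <= Es i)%VS.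
  move=> ir Ti ni; apply: (good_monoS HG) => //; last exact: ltnW.
  by rewrite ltn_neqAle eq_sym ni Hmin.
have Lsub : submodule act L by apply: HEs.
have [h0 [h0U h0phi h0K h0act]] : exists h : 'Hom(F, E), [/\ forall u, u \in Fs i0 -> h u \in L,
     forall u, u \in Fs i0 -> phi i0 (h u) = u,
     forall x, x \in L -> h (phi i0 x) = x &
     forall a u, u \in Fs i0 -> h (actF a u) - act a (h u) \in Es i0].
  apply: (phi_inv HG) => //; first by move=> x _; rewrite HEi0 memv0 => /eqP.
  by rewrite HEi0 add0v.
have h0act' a u : u \in Fs i0 -> h0 (actF a u) = act a (h0 u).
  by move=> Fu; have := h0act a u Fu; rewrite HEi0 memv0 subr_eq0 => /eqP.
have bperpL x y : x \in L -> y \in perpv L -> b y x = 0.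
  by move=> Lx /perpvP Hy; apply: brefl; apply: Hy.
have bLperp x y : x \in L -> y \in perpv L -> b x y = 0.
  by move=> Lx /perpvP Hy; apply: Hy.
have Lperp_sub : forall a x, x \in V -> x \in perpv L -> act a x \in perpv L.
  move=> a x Vx /perpvP px; apply/perpvP => u Lu.
  rewrite (good_compat' HG) //; last exact: subvP LV _ Lu.
  by apply: px; apply: Lsub.
case: (boolP (L <= perpv L)%VS) => [iso | niso].
{
  have bP (U : {vspace E}) x y : x \in U -> y \in perpv U -> b x y = 0.
    by move=> Ux /perpvP Hy; apply: Hy.
  have bP' (U : {vspace E}) x y : x \in U -> y \in perpv U -> b y x = 0.
    by move=> Ux Hy; apply: brefl; apply: bP Hy.
  have exj : exists j, ((j < r)%N && ~~ (Es j.+1 <= perpv L)%VS).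
    exists r.-1; have r0 : (0 < r)%N by apply: leq_ltn_trans Hi0r.
    rewrite prednK // leqnn HEr /=; apply/negP => VL.
    move/negP: L0; apply; rewrite -subv0; apply/subvP => l Ll; rewrite memv0.
    apply/eqP; apply: HndV; first exact: subvP LV _ Ll.
    by move=> y Vy; apply: bP (subvP VL _ Vy).
  case: (ex_minnP exj) => j /andP[jr nEj] Hminj.
  have Ejp : (Es j <= perpv L)%VS.
    move: jr Hminj nEj; case: j => [|j'] jr Hminj nEj; first by rewrite HE0 sub0v.
    apply/negPn/negP => H; have := Hminj j'; rewrite (ltnW jr) H /= => /(_ isT).
    by rewrite ltnn.
  have ij : (i0 < j)%N.
    rewrite ltnNge; apply/negP => le; move/negP: nEj; apply; apply: subv_trans iso.
    by apply: (good_monoS HG).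
  have Tj : T j.
    apply/negPn/negP => nTj; move/negP: nEj; apply; by rewrite -(Hin j jr nTj).
  have [[sEj nEjj Hmj] Himgj Hkerj Hlinj] := Hact j jr Tj.
  have Ecap : (Es j.+1 :&: perpv L)%VS = Es j.
    have HK : submodule act (Es j.+1 :&: perpv L)%VS.
      move=> a y; rewrite !memv_cap => /andP[Ey py].
      rewrite (good_sm HG) //= Lperp_sub //; exact: subvP (good_sub HG jr) _ Ey.
    have S0 : (Es j <= Es j.+1 :&: perpv L)%VS by rewrite subv_cap sEj Ejp.
    have [//|eK] := Hmj _ HK S0 (capvSl _ _).
    by case/negP: nEj; rewrite -eK capvSr.
  have LEj : (L <= Es j)%VS by apply: (good_monoS HG) => //; exact: ltnW.
  have EjV : (Es j.+1 <= V)%VS by exact: (good_sub HG jr).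
  have Kj l : l \in L -> (forall e, e \in Es j.+1 -> b e l = 0) -> l = 0.
    have HK : submodule act (L :&: perpv (Es j.+1))%VS.
      move=> a y; rewrite !memv_cap => /andP[Ly py].
      rewrite Lsub //=; apply/perpvP => e Ee.
      rewrite (good_compat' HG) //; [|exact: subvP EjV _ Ee | exact: subvP LV _ Ly].
      by apply: bP py; apply: (good_sm HG).
    have S0 : (Es i0 <= L :&: perpv (Es j.+1))%VS by rewrite HEi0 sub0v.
    have [eK|eK] := HmL _ HK S0 (capvSl _ _).
      move=> Ll Hl; have : l \in Es i0 by rewrite -eK memv_cap Ll; apply/perpvP.
      by rewrite HEi0 memv0 => /eqP.
    case/negP: nEj; apply/subvP => e Ee; apply/perpvP => u Lu.
    apply: brefl; apply: bP Ee _.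
    by have := capvSr L (perpv (Es j.+1)); rewrite eK => /subvP; apply.
  set C := (Es j.+1 :\: Es j)%VS.
  have CE : (C <= Es j.+1)%VS by apply: diffvSl.
  have CEj c : c \in C -> c \in Es j -> c = 0.
    move=> Cc Ec; apply/eqP; rewrite -memv0 -(capv_diff (Es j.+1) (Es j)).
    by rewrite memv_cap Cc.
  have EjC : (Es j.+1 <= C + Es j)%VS.
    by rewrite -{1}(addv_diff_cap (Es j.+1) (Es j)) (capv_idPr sEj) subvv.
  have Cperp c : c \in C -> c \in perpv L -> c = 0.
    by move=> Cc pc; apply: CEj => //; rewrite -Ecap memv_cap (subvP CE) .
  have HRC l : l \in L -> (forall x, x \in C -> b x l = 0) -> l = 0.
    move=> Ll Hl; apply: Kj => // e /(subvP EjC) /memv_addP[c Cc [e' Ee' ->]].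
    rewrite bDl Hl // add0r; apply: (bP' L) Ll _; exact: subvP Ejp _ Ee'.
  have isoL x y : x \in L -> y \in L -> b x y = 0.
    by move=> Lx Ly; apply: bP Lx (subvP iso _ Ly).
  have dCL : (\dim C <= \dim L)%N.
    apply: pair_dim => y Cy Hy; apply: Cperp => //; exact/perpvP.
  have [tau [tauL tauiso]] := iso_compl isoL HRC dCL.
  pose sig := (\1%VF + tau)%VF.
  have sigE x : sig x = x + tau x by rewrite add_lfunE id_lfunE.
  set L' := (sig @: C)%VS.
  have L'P y : y \in L' -> exists2 c, c \in C & y = c + tau c.
    by case/memv_imgP => c Cc ->; exists c; rewrite ?sigE.
  have tauEj x : tau x \in Es j by apply: subvP LEj _ (tauL x).
  have L'E : (L' <= Es j.+1)%VS.
    apply/subvP => y /L'P[c Cc ->]; apply: memvD; first exact: subvP CE _ Cc.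
    exact: subvP sEj _ (tauEj c).
  have EjL' : (Es j.+1 <= Es j + L')%VS.
    apply/subvP => e /(subvP EjC) /memv_addP[c Cc [e' Ee' ->]].
    rewrite (_ : c + e' = (e' - tau c) + sig c); last first.
      by rewrite sigE [c + tau c]addrC addrA subrK addrC.
    by apply: memv_add; [apply: memvB | apply: memv_img].
  have L'Ej y : y \in L' -> y \in Es j -> y = 0.
    case/L'P => c Cc -> Ey.
    have c0 : c = 0 by apply: CEj => //; rewrite -(addrK (tau c) c) memvB.
    by rewrite c0 linear0 addr0.
  have L'p y : y \in L' -> y \in perpv L -> y = 0.
    move=> L'y py; apply: L'Ej => //; rewrite -Ecap memv_cap py andbT.
    exact: subvP L'E _ L'y.
  have isoL' x y : x \in L' -> y \in L' -> b x y = 0.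
    by case/L'P => c Cc -> /L'P[d Cd ->]; apply: tauiso.
  have HRL' l : l \in L -> (forall y, y \in L' -> b y l = 0) -> l = 0.
    move=> Ll Hl; apply: Kj => // e /(subvP EjL') /memv_addP[e' Ee' [y L'y ->]].
    rewrite bDl (Hl y L'y) addr0; apply: (bP' L) Ll _; exact: subvP Ejp _ Ee'.
  have L'V : (L' <= V)%VS by apply: subv_trans L'E EjV.
  have dL'L : (\dim L' <= \dim L)%N.
    by apply: pair_dim => y L'y Hy; apply: L'p => //; exact/perpvP.
  have dLL' : (\dim L <= \dim L')%N by apply: pair_dim => l Ll Hl; apply: HRL'.
  set W := (V :&: perpv L :&: perpv L')%VS.
  have WP x : x \in W -> [/\ x \in V, x \in perpv L & x \in perpv L'].
    by rewrite !memv_cap => /andP[/andP[-> ->] ->].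
  have dec x : x \in V -> exists l, exists y, [/\ l \in L, y \in L' & x - y - l \in W].
    move=> Vx.
    have [y L'y Hy] := pair_solve (P := L) (Q := L') (fun z Lz Hz => L'p z Lz (proj2 (perpvP _ _) Hz))
       dLL' (fun i => b (vbasis L)`_i x).
    have [l Ll Hl] := pair_solve (P := L') (Q := L) HRL' dL'L (fun i => b (vbasis L')`_i (x - y)).
    exists l, y; split => //.
    have Vy : y \in V by exact: subvP L'V _ L'y.
    have Vl : l \in V by exact: subvP LV _ Ll.
    rewrite !memv_cap (memvB (memvB Vx Vy) Vl) /=; apply/andP; split; apply/perpvP => u Uu.
      by rewrite bBr (isoL u l) // subr0 bBr (bext Hy Uu) subrr.
    by rewrite bBr (bext Hl Uu) subrr.
  have HLW x : x \in L -> x \in W -> x = 0.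
    move=> Lx /WP[_ _ px]; apply: HRL' => // y L'y; exact: bP L'y px.
  have Hdec x : x \in V -> x \in perpv L -> x \in (L + W)%VS.
    move=> Vx px; have [l [y [Ll L'y Wxyl]]] := dec x Vx.
    have y0 : y = 0.
      apply: L'p => //; have [_ pw _] := WP _ Wxyl.
      rewrite (_ : y = x - l - (x - y - l)); last first.
        by rewrite [x - y - l]addrAC subKr.
      by apply: memvB => //; apply: memvB => //; exact: subvP iso _ Ll.
    move: Wxyl; rewrite y0 subr0 => Wxl.
    by rewrite -(subrK l x) addrC memv_add.
  have Hnd x : x \in W -> (forall y, y \in W -> b x y = 0) -> x = 0.
    move=> Wx Hx; have [Vx px p'x] := WP x Wx; apply: HndV => // z Vz.
    have [l [y [Ll L'y Wzyl]]] := dec z Vz.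
    set w := z - y - l in Wzyl.
    have ez : z = (w + l) + y by rewrite /w !subrK.
    clearbody w; rewrite ez !bDr (Hx w Wzyl) (bP' L l x Ll px) (bP' L' y x L'y p'x).
    by rewrite !addr0.
  pose D := fun i => (i == i0) || (i == j).
  have HD0 : D i0 by rewrite /D eqxx.
  have HDtriv i : (i < r)%N -> T i -> D i -> (Es i.+1 :&: W <= Es i)%VS.
    move=> _ _ /orP[/eqP -> | /eqP ->].
      apply/subvP => x; rewrite memv_cap => /andP[Lx Wx].
      by rewrite (HLW x Lx Wx) mem0v.
    rewrite -Ecap; apply: capvS => //; apply/subvP => x; by case/WP.
  have Hsplit i : (i < r)%N -> T i -> ~~ D i -> (Es i.+1 <= Es i + Es i.+1 :&: W)%VS.
    move=> ir Ti; rewrite /D negb_or => /andP[ni nj].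
    have LEi := LEs i ir Ti ni.
    have sEi := good_mono HG ir.
    apply/subvP => x Ex; have Vx : x \in V by apply: subvP (good_sub HG ir) _ Ex.
    have [l [y [Ll L'y Wxyl]]] := dec x Vx.
    have lEi : l \in Es i by apply: subvP LEi _ Ll.
    case: (ltngtP i j) => [lt_ij | lt_ji | eij]; last by move: nj; rewrite eij eqxx.
    - have px : x \in perpv L.
        by apply: (subvP Ejp); apply: (subvP (good_monoS HG lt_ij (ltnW jr))).
      have y0 : y = 0.
        apply: L'p => //; have [_ pw _] := WP _ Wxyl.
        rewrite (_ : y = x - l - (x - y - l)); last first.
          by rewrite [x - y - l]addrAC subKr.
        by apply: memvB => //; apply: memvB => //; exact: subvP iso _ Ll.
      move: Wxyl; rewrite y0 subr0 => Wxl.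
      rewrite -(subrK l x) addrC memv_add // memv_cap Wxl andbT memvB //.
      exact: subvP sEi _ lEi.
    - have yEi : y \in Es i.
        by apply: subvP (good_monoS HG lt_ji (ltnW ir)) _ (subvP L'E _ L'y).
      have exA : x - y - l = x - (y + l) by rewrite opprD addrA.
      have exB : x = (y + l) + (x - (y + l)) by rewrite addrC subrK.
      rewrite exB; apply: memv_add; first exact: memvD.
      rewrite memv_cap -exA Wxyl andbT.
      by apply: memvB; [apply: memvB => // | ]; apply: (subvP sEi).
  have HG' := restrict_good HG (D := D) Hi0r HEi0 Hmin
     (subv_trans (capvSl _ _) (capvSl _ _)) (subv_trans (capvSl _ _) (capvSr _ _))
     HLW Hdec Hnd HD0 HDtriv Hsplit.
  have dimlt : (\dim W < \dim V)%N.
    by apply: dim_lt (subv_trans (capvSl _ _) (capvSl _ _)) LV HLW L0.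
  have [g' [g'V g'sum g'c]] := IH _ _ _ _ dimlt HG'.
  have g'W i w : (i < r)%N -> T i -> i != i0 -> i != j -> w \in Fs i -> g' i w \in W.
    move=> ir Ti ni nj Fw; apply: subvP (g'V i ir _) _ (memv_img _ Fw).
    by rewrite Ti /D negb_or ni nj.
  have [hj [hjU hjphi hjK hjact]] := phi_inv HG jr Tj L'E L'Ej EjL'.
  have hjact' a u : u \in Fs j -> exists2 e, e \in perpv L & hj (actF a u) = act a (hj u) + e.
    move=> Fu; exists (hj (actF a u) - act a (hj u)); last by rewrite addrC subrK.
    by apply: subvP Ejp _ (hjact a u Fu).
  have Fij : j != i0 by rewrite eq_sym neq_ltn ij.
  exists (fun i => if i == i0 then h0 else if i == j then hj else g' i); split.
  - move=> i ir Ti; case: eqP => [-> | /eqP ni].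
      by apply/subvP => y /memv_imgP[u Fu ->]; apply: subvP LV _ (h0U u Fu).
    case: eqP => [-> | /eqP nj].
      by apply/subvP => y /memv_imgP[u Fu ->]; apply: subvP L'V _ (hjU u Fu).
    apply/subvP => y /memv_imgP[u Fu ->]; have [] := WP _ (g'W i u ir Ti ni nj Fu) => //.
  - apply/subvP => x Vx; have [l [y [Ll L'y Wxyl]]] := dec x Vx.
    rewrite -(subrK l x) -(subrK y (x - l)).
    rewrite (_ : x - l - y = x - y - l); last by rewrite -!addrA [- l + _]addrC.
    apply: memvD; first apply: memvD.
    + move: (subvP g'sum _ Wxyl); apply: subvP; apply/subv_sumP => i /andP[Ti].
      rewrite /D negb_or => /andP[ni nj].
      by apply: (sumv_sup i) => //=; rewrite (negPf ni) (negPf nj) subvv.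
    + apply: (sumv_sup (Ordinal jr)) => //=; rewrite (negPf Fij) eqxx.
      rewrite -(hjK y L'y); apply: memv_img; rewrite -Himgj; apply: memv_img.
      exact: subvP L'E _ L'y.
    + apply: (sumv_sup (Ordinal Hi0r)) => //=; rewrite eqxx.
      rewrite -(h0K l Ll); apply: memv_img; rewrite -HimgL; exact: memv_img.
  - move=> i m a u v ir mr Ti Tm Fu Fv.
    have FaU := FsA HG a ir Ti Fu.
    have FaV := FsA HG (star a) mr Tm Fv.
    case: (eqVneq i i0) => [ei | ni] /=.
      subst i; rewrite h0act' //.
      have Lu := h0U u Fu.
      case: (eqVneq m i0) => [em | nm] /=.
        subst m; rewrite h0act' //; apply: Hc; apply: (subvP LV) => //; exact: h0U.
      case: (eqVneq m j) => [em | nmj] /=.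
        subst m; have [e pe ->] := hjact' (star a) v Fv.
        rewrite bDr (bP L _ e) // addr0 Hc //; [exact: subvP LV _ Lu | exact: subvP L'V _ (hjU v Fv)].
      rewrite !(bP L) //; [by have [] := WP _ (g'W m _ mr Tm nm nmj FaV)
        | exact: Lsub | by have [] := WP _ (g'W m _ mr Tm nm nmj Fv)].
    case: (eqVneq i j) => [ej | nij] /=.
      subst i.
      have L'u := hjU u Fu.
      have L'au := hjU _ FaU.
      case: (eqVneq m i0) => [em | nm] /=.
        subst m; have [e pe ->] := hjact' a u Fu.
        rewrite h0act' // bDl (bP' L (h0 v) e (h0U v Fv) pe) addr0.
        by rewrite Hc //; [exact: subvP L'V _ L'u | apply: subvP LV _ _; exact: h0U].
      case: (eqVneq m j) => [em | nmj] /=.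
        subst m; by rewrite !isoL' // hjU.
      have [_ _ p1] := WP _ (g'W m _ mr Tm nm nmj Fv).
      have [_ _ p2] := WP _ (g'W m _ mr Tm nm nmj FaV).
      by rewrite !(bP L') //.
    have [_ q1 q1'] := WP _ (g'W i _ ir Ti ni nij Fu).
    have [_ q2 q2'] := WP _ (g'W i _ ir Ti ni nij FaU).
    case: (eqVneq m i0) => [em | nm] /=.
      subst m; rewrite h0act' // (bP' L (h0 v) _ (h0U v Fv) q2).
      by rewrite (bP' L _ _ (Lsub _ _ (h0U v Fv)) q1).
    case: (eqVneq m j) => [em | nmj] /=.
      subst m; rewrite !(bP' L') //; exact: hjU.
    apply: g'c => //; by rewrite /D negb_or ?ni ?nij ?nm ?nmj ?Ti ?Tm.

}
have LLp x : x \in L -> x \in perpv L -> x = 0.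
  have HK : submodule act (L :&: perpv L)%VS.
    move=> a y; rewrite !memv_cap => /andP[Ly py].
    by rewrite Lsub //= Lperp_sub // (subvP LV).
  have S0 : (Es i0 <= L :&: perpv L)%VS by rewrite HEi0 sub0v.
  have [eK|eK] := HmL _ HK S0 (capvSl _ _).
    move=> Lx px; have : x \in Es i0 by rewrite -eK memv_cap Lx px.
    by rewrite HEi0 memv0 => /eqP.
  by case/negP: niso; apply: subv_trans (capvSr L (perpv L)); rewrite eK subvv.
set W := (V :&: perpv L)%VS.
have decL y : y \in V -> exists2 l, l \in L & y - l \in W.
  move=> Vy.
  have [l Ll Hl] := pair_solve (P := L) (Q := L) (fun z Lz Hz => LLp z Lz (proj2 (perpvP _ _) Hz))
     (leqnn _) (fun i => b (vbasis L)`_i y).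
  have Vl : l \in V by apply: subvP LV _ Ll.
  exists l => //; rewrite memv_cap memvB //=.
  apply/perpvP => u Lu; rewrite bBr (bext Hl Lu) subrr //.
have Wp x : x \in W -> x \in perpv L by rewrite memv_cap => /andP[].
have WV x : x \in W -> x \in V by rewrite memv_cap => /andP[].
have Hnd x : x \in W -> (forall y, y \in W -> b x y = 0) -> x = 0.
  move=> Wx Hx; apply: HndV; first exact: WV.
  move=> y Vy.
  have [l Ll Wyl] := decL y Vy.
  by rewrite -(subrK l y) bDr Hx // (bperpL l x Ll (Wp x Wx)) addr0.
have HLW x : x \in L -> x \in W -> x = 0 by move=> Lx Wx; apply: LLp => //; exact: Wp.
have Hdec x : x \in V -> x \in perpv L -> x \in (L + W)%VS.
  move=> Vx px; rewrite -[x]add0r; apply: memv_add; first exact: mem0v.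
  by rewrite memv_cap Vx px.
have HDtriv i : (i < r)%N -> T i -> i == i0 -> (Es i.+1 :&: W <= Es i)%VS.
  move=> _ _ /eqP ->; apply/subvP => x; rewrite memv_cap => /andP[Lx Wx].
  by rewrite (HLW x Lx Wx) mem0v.
have Hsplit i : (i < r)%N -> T i -> ~~ (i == i0) -> (Es i.+1 <= Es i + Es i.+1 :&: W)%VS.
  move=> ir Ti ni; apply/subvP => x Ex.
  have Vx : x \in V by apply: subvP (good_sub HG ir) _ Ex.
  have [l Ll Wxl] := decL x Vx; rewrite -(subrK l x) addrC.
  have lE : l \in Es i by apply: subvP (LEs i ir Ti ni) _ Ll.
  apply: memv_add => //; rewrite memv_cap Wxl andbT memvB //.
  exact: subvP (good_mono HG ir) _ lE.
have HG' := restrict_good HG (D := fun i => i == i0) Hi0r HEi0 Hmin (capvSl _ _) (capvSr _ _)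
   HLW Hdec Hnd (eqxx _) HDtriv Hsplit.
have dimlt : (\dim W < \dim V)%N by apply: dim_lt (capvSl _ _) LV HLW L0.
have [g' [g'V g'sum g'c]] := IH _ _ _ _ dimlt HG'.
have g'W i w : (i < r)%N -> T i -> i != i0 -> w \in Fs i -> g' i w \in W.
  move=> ir Ti ni Fw; apply: subvP (g'V i ir _) _ (memv_img _ Fw).
  by rewrite Ti ni.
exists (fun i => if i == i0 then h0 else g' i); split.
- move=> i ir Ti; case: eqP => [-> | /eqP ni].
    by apply/subvP => y /memv_imgP[u Fu ->]; apply: subvP LV _ (h0U u Fu).
  apply: subv_trans (g'V i ir _) (capvSl _ _); by rewrite Ti ni.
- apply/subvP => y Vy; have [l Ll Wyl] := decL y Vy; rewrite -(subrK l y).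
  apply: memvD.
    move: (subvP g'sum _ Wyl); apply: subvP; apply/subv_sumP => i /andP[Ti ni].
    by apply: (sumv_sup i) => //=; rewrite (negPf ni) subvv.
  apply: (sumv_sup (Ordinal Hi0r)) => //=; rewrite eqxx.
  rewrite -(h0K l Ll); apply: memv_img; rewrite -HimgL; exact: memv_img.
- move=> i j a u v ir jr Ti Tj Fu Fv.
  have FaU := FsA HG a ir Ti Fu.
  have FaV := FsA HG (star a) jr Tj Fv.
  case: (eqVneq i i0) => [ei | ni]; case: (eqVneq j i0) => [ej | nj];
    rewrite /= ?eqxx ?(negPf ni) ?(negPf nj) //=; try subst i; try subst j.
  + rewrite !h0act' //; apply: Hc; apply: (subvP LV); exact: h0U.
  + rewrite h0act' //.
    rewrite !bLperp //; [exact: h0U | exact: Wp (g'W _ _ jr Tj nj FaV)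
      | apply: Lsub; exact: h0U | exact: Wp (g'W _ _ jr Tj nj Fv)].
  + rewrite h0act' //.
    rewrite !bperpL //; [apply: Lsub; exact: h0U | exact: Wp (g'W _ _ ir Ti ni Fu)
      | exact: h0U | exact: Wp (g'W _ _ ir Ti ni FaU)].
  + by apply: g'c => //; [rewrite Ti ni | rewrite Tj nj].
Qed.


End Forms.
Lemma main_ind (k : fieldType) (E : vectType k) (b : E -> E -> k)
  (Hb1 : forall (c : k) x1 x2 y, b (c *: x1 + x2) y = c * b x1 y + b x2 y)
  (Hb2 : forall (c : k) x y1 y2, b x (c *: y1 + y2) = c * b x y1 + b x y2)
  (eps : k) (Heps : forall x y, b y x = eps * b x y)
  (Hdiag : forall x, b x x / 2 + eps * (b x x / 2) = b x x)
  (A : algType k) (star : A -> A) (Hstar2 : forall a, star (star a) = a)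
  (F : vectType k) (actF : A -> 'End(F)) (Fs : nat -> {vspace F})
  (phi : nat -> 'Hom(E, F)) (r : nat) :
  forall n V act Es T, (\dim V < n)%N -> good b star actF Fs phi r V act Es T ->
    concl b star actF Fs r V T.
Proof.
elim=> [//|n IHn] V act Es T lt HG.
apply: (step Hb1 Hb2 Heps Hdiag Hstar2 HG) => V' act' Es' T' lt' HG'.
by apply: (IHn _ _ _ _ _ HG'); apply: leq_trans lt' lt.
Qed.

Lemma pchar2 (k : fieldType) : (2 \notin [pchar k])%N -> (2%:R : k) != 0.
Proof. by rewrite inE /=. Qed.

Theorem theorem4p2p1 (k : fieldType) (A : algType k) (star : A -> A)
    (E : vectType k) (act : A -> 'End(E)) (b : E -> E -> k) :
  involution star -> module_action act ->
  bilinear_form b -> nondegenerate_bform b -> compatible_form act star b ->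
  (alternating_bform b \/ (symmetric_bform b /\ (2 \notin [pchar k])%N)) ->
  forall (Ess : vectType k) (actss : A -> 'End(Ess)),
    module_action actss -> is_semisimplification act actss ->
    exists b' : Ess -> Ess -> k,
      [/\ bilinear_form b',
          (symmetric_bform b -> symmetric_bform b'),
          (alternating_bform b -> alternating_bform b'),
          compatible_form actss star b' &
          forms_isomorphic b b'].
Proof.
move=> [_ Hstar2 _] _ [Hb1 Hb2] [Hnd1 _] Hcomp Hcase Ess actss _ Hss.
have [eps [Heps Hdiag]] : exists eps : k, (forall x y, b y x = eps * b x y) /\
    (forall x, b x x / 2 + eps * (b x x / 2) = b x x).
  case: Hcase => [Halt | [Hsym H2]].
    exists (-1); split => [x y|x]; last by rewrite Halt mul0r mulr0 addr0.
    have := Halt (x + y); rewrite (bDl Hb1) !(bDr Hb2) !Halt add0r addr0.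
    by move=> H; rewrite mulN1r; apply/eqP; rewrite -addr_eq0 addrC H.
  exists 1; split => [x y|x]; first by rewrite mul1r Hsym.
  have h2 := pchar2 H2; rewrite mul1r; field.
  done.
case: Hss => r [Es [Fs [phi [[HE0 HEr HEs] Hsimp Hdata Hsum Hdir]]]].
have HG : good b star actss Fs phi r fullv act Es (fun _ => true).
  split.
  - move=> x _ Hx; apply: Hnd1 => y; exact: Hx (memvf y).
  - move=> a x y _ _; exact: Hcomp.
  - by split.
  - by [].
  - move=> i ir _; have [HF Himg Hker Hlin] := Hdata i ir; split => //; exact: Hsimp.
have [g [_ gsum gc]] := main_ind Hb1 Hb2 Heps Hdiag Hstar2 (ltnSn _) HG.
pose pi := sumv_pi_for (esym Hsum).
have piS v : \sum_(i < r) pi i v = v by apply: sumv_pi_sum; exact: memvf.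
have piF (i : 'I_r) v : pi i v \in Fs i by apply: memv_sum_pi.
move/directv_sum_unique: Hdir => Hu.
have uniq (us vs : 'I_r -> Ess) : (forall i, us i \in Fs i) -> (forall i, vs i \in Fs i) ->
    \sum_(i < r) us i = \sum_(i < r) vs i -> forall i, us i = vs i.
  move=> Uu Uv /eqP; rewrite Hu // => /forall_inP H i; apply/eqP; exact: H.
have pi_in (i : 'I_r) u : u \in Fs i -> forall m, pi m u = if m == i then u else 0.
  move=> Fu; apply: uniq => // [m|].
    by case: eqP => [-> // | _]; exact: mem0v.
  rewrite piS (bigD1 i) //= eqxx big1 ?addr0 // => m /negPf -> //.
have pi_act a v (m : 'I_r) : pi m (actss a v) = actss a (pi m v).
  apply: (uniq (fun m => pi m (actss a v)) (fun m => actss a (pi m v))) => // [m'|].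
    by have [HF _ _ _] := Hdata m' (ltn_ord m'); apply: HF.
  by rewrite piS -linear_sum /= piS.
pose G : 'Hom(Ess, E) := \sum_(i < r) (g i \o pi i)%VF.
have GE v : G v = \sum_(i < r) g i (pi i v).
  by rewrite sum_lfunE; apply: eq_bigr => i _; rewrite comp_lfunE.
have limG : limg G = fullv.
  apply/eqP; rewrite eqEsubv subvf /=; apply: subv_trans gsum _.
  apply/subv_sumP => i _; apply/subvP => x /memv_imgP[u Fu ->].
  have -> : g i u = G u.
    rewrite GE (bigD1 i) //= (pi_in i u Fu) eqxx big1 ?addr0 // => m /negPf nm.
    by rewrite (pi_in i u Fu) nm linear0.
  exact: memv_img (memvf u).
have dimF i : (i < r)%N -> (\dim (Fs i) + \dim (Es i) = \dim (Es i.+1))%N.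
  move=> ir; have [[sE _ _] ] := (Hsimp i ir, Hdata i ir).
  have [_ Himg Hker _] := Hdata i ir.
  have eK : (Es i.+1 :&: lker (phi i))%VS = Es i.
    apply/vspaceP => x; rewrite memv_cap memv_ker; apply/idP/idP.
      by case/andP => Ex /eqP px; apply/(Hker x).
    by move=> Ex; rewrite (subvP sE _ Ex) /=; apply/eqP; apply/(Hker x) => //; exact: subvP sE _ Ex.
  by rewrite -Himg -(limg_ker_dim (phi i) (Es i.+1)) eK addnC.
have dimsum n : (n <= r)%N -> (\sum_(i < n) \dim (Fs i) = \dim (Es n))%N.
  elim: n => [|n IHn] nr; first by rewrite big_ord0 HE0 dimv0.
  by rewrite big_ord_recr /= IHn ?(ltnW nr) // addnC dimF.
have dimEss : \dim (fullv : {vspace Ess}) = \dim (fullv : {vspace E}).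
  rewrite -Hsum -HEr -dimsum //.
  by move/directv_sum_unique: Hu => /directvP ->.
have kerG : lker G == 0%VS.
  have := limg_ker_dim G fullv; rewrite limG capfv dimEss => /eqP.
  by rewrite -{2}[\dim (fullv : {vspace E})]add0n eqn_add2r dimv_eq0.
exists (fun u v => b (G u) (G v)); split.
- split => c x1 x2 y; by rewrite linearP /= ?Hb1 ?Hb2.
- by move=> Hs x y; apply: Hs.
- by move=> Ha x; apply: Ha.
- move=> a u v; rewrite !GE (bsuml Hb1) (bsuml Hb1); apply: eq_bigr => i _.
  rewrite (bsumr Hb2) (bsumr Hb2); apply: eq_bigr => m _.
  by rewrite !pi_act; apply: gc.
- exists (G^-1)%VF; split.
    apply: (Bijective (g := G)); last exact: lker0_lfunK kerG.
    by move=> x; apply: limg_lfunVK; rewrite limG memvf.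
  by move=> x y; rewrite !limg_lfunVK // limG memvf.
Qed.
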